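(* Let $\lambda$ be an infinite cardinal, $\theta$ an infinite regular cardinal with $\theta<\lambda$, and $\chi$ either $2$ or an infinite cardinal. Then: (1) $\lambda\le m(\theta,\lambda)\le\min\{\mathrm{cf}([\lambda]^\theta,\subseteq),\mathrm{cf}([\lambda]^\theta,\supseteq)\}$; (2) if $\chi\le\theta^+$, then $m(\theta,\lambda)\le m(\theta,\lambda,\theta,\chi)$; (3) $m(\theta,\theta,\theta,\chi)\le m(\lambda,\lambda,\theta,\chi)\le\max\{m(\theta,\theta,\theta,\chi),m(\theta,\lambda)\}$.
   Context: $m(\theta,\lambda)$ is the least size of $\mathcal Y\subseteq[\lambda]^\theta$ such that every $X\in[\lambda]^\theta$ meets some $Y\in\mathcal Y$ in a set of size $\theta$. For a set $\Delta$ with $|\Delta|\ge\theta$, $m(\Delta,\lambda,\theta,\chi)$ is the least size of a family $\mathcal H$ of functions from $\Delta$ to $[\lambda]^{<\chi}$ such that for every $X\in[\Delta]^\theta$ and every $g:X\to\lambda$ there is $h\in\mathcal H$ with $|\{\xi\in X\mid g(\xi)\in h(\xi)\}|=\theta$. $\mathrm{cf}([\lambda]^\theta,\subseteq)$ is the least size of $\mathcal Y\subseteq[\lambda]^\theta$ such that every $X\in[\lambda]^\theta$ is contained in some member of $\mathcal Y$; $\mathrm{cf}([\lambda]^\theta,\supseteq)$ is the least size of $\mathcal Y\subseteq[\lambda]^\theta$ such that every $X\in[\lambda]^\theta$ contains some member of $\mathcal Y$. *)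

(* Defs.v *)
(* cardinal comparisons of sets via
   classical/cardinality.v ([A #<= B], [A #= B]). Cardinals are
   represented by (the full sets of) types. *)
From mathcomp Require Import all_boot.
From mathcomp Require Import boolp classical_sets cardinality.
Set Implicit Arguments. Unset Strict Implicit. Unset Printing Implicit Defensive.
Local Open Scope classical_set_scope.
Local Open Scope card_scope.

Definition card_lt {T U : Type} (A : set T) (B : set U) : Prop :=
  (A #<= B) /\ ~ (B #<= A).

Definition infinite_regular (Th : Type) : Prop :=
  infinite_set [set: Th] /\
  forall (I : set Th) (F : Th -> set Th),
    card_lt I [set: Th] ->
    (forall i, I i -> card_lt (F i) [set: Th]) ->
    card_lt (\bigcup_(i in I) F i) [set: Th].

Definition sub_card (Th L : Type) (X : set L) : Prop := X #= [set: Th].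

(* Y witnesses the definition of m(theta, lambda) *)
Definition m_family (Th L : Type) (Y : set (set L)) : Prop :=
  (forall y, Y y -> sub_card Th y) /\
  forall X : set L, sub_card Th X ->
    exists y, Y y /\ sub_card Th (X `&` y).

(* Y witnesses cf([lambda]^theta, subseteq) *)
Definition cf_sub_family (Th L : Type) (Y : set (set L)) : Prop :=
  (forall y, Y y -> sub_card Th y) /\
  forall X : set L, sub_card Th X -> exists y, Y y /\ X `<=` y.

(* Y witnesses cf([lambda]^theta, supseteq) *)
Definition cf_sup_family (Th L : Type) (Y : set (set L)) : Prop :=
  (forall y, Y y -> sub_card Th y) /\
  forall X : set L, sub_card Th X -> exists y, Y y /\ y `<=` X.

(* H witnesses the definition of m(Delta, lambda, theta, chi), with
   Delta = D, lambda = V, theta = Th, chi = C: a family of functions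
   Delta -> [lambda]^{<chi} such that for every X in [Delta]^theta and every
   g : X -> lambda some h in H has |{xi in X | g xi in h xi}| = theta.
   (g is taken total on D; V is nonempty in all uses, so any g : X -> V
   extends to D.) *)
Definition m4_family (D V Th C : Type) (H : set (D -> set V)) : Prop :=
  (forall h, H h -> forall xi, card_lt (h xi) [set: C]) /\
  forall X : set D, sub_card Th X ->
    forall g : D -> V,
      exists h, H h /\ sub_card Th [set xi | X xi /\ h xi (g xi)].

(* Main.v *)
Require Import Defs.
From mathcomp Require Import all_boot.
From mathcomp Require Import boolp classical_sets functions cardinality.
Set Implicit Arguments. Unset Strict Implicit. Unset Printing Implicit Defensive.
Local Open Scope classical_set_scope.
Local Open Scope card_scope.
Lemma le_inj T U (A : set T) (B : set U) (f : T -> U) :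
  (forall x, A x -> B (f x)) ->
  (forall x y, A x -> A y -> f x = f y -> x = y) -> A #<= B.
Proof.
move=> fAB finj.
have : $|{injfun A >-> B}|.
  apply/injfunPex; exists f; first by move=> x; apply: fAB.
  by move=> x y /set_mem Ax /set_mem Ay; apply: finj.
by case=> F; apply: inj_card_le F.
Qed.
Lemma inj_le T U (u0 : U) (A : set T) (B : set U) : A #<= B ->
  exists f : T -> U, (forall x, A x -> B (f x)) /\
  (forall x y, A x -> A y -> f x = f y -> x = y).
Proof.
elim/Ppointed: U => U in u0 B *.
  by case: (no u0).
move=> /pcard_leP /injfunPex [f ff fi]; exists f; split; first by move=> x; apply: ff.
by move=> x y Ax Ay; apply: fi; apply/mem_set.
Qed.

Lemma rel_fun T U (u0 : U) (R : T -> U -> Prop) :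
  exists f : T -> U, forall x, (exists y, R x y) -> R x (f x).
Proof.
exists (fun x => match pselect (exists y, R x y) with
  left h => projT1 (cid h) | right _ => u0 end).
by move=> x ex; case: pselect => [h|//]; exact: (projT2 (cid h)).
Qed.

Lemma set0_le T U (A : set T) (B : set U) : ~ (exists x, A x) -> A #<= B.
Proof.
move=> nA; have -> : A = set0 by apply/seteqP; split=> x // Ax; case: nA; exists x.
exact: card_ge0.
Qed.

Lemma card_le_total T U (A : set T) (B : set U) : A #<= B \/ B #<= A.
Proof.
case: (pselect (exists a, A a)) => [[a0 Aa0]|nA]; last by left; apply: set0_le.
case: (pselect (exists b, B b)) => [[b0 Bb0]|nB]; last by right; apply: set0_le.
pose P := [set G : set (T * U) | G `<=` A `*` B /\
  (forall a b b', G (a, b) -> G (a, b') -> b = b') /\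
  (forall a a' b, G (a, b) -> G (a', b) -> a = a')].
have [G [[GAB [Gf Gi]] Gmax]] : exists G, P G /\ forall G', G `<` G' -> ~ P G'.
  apply: Zorn_bigcup => F FP Ftot; split; [|split].
  - by move=> p [X FX Xp]; exact: (FP X FX).1 _ Xp.
  - move=> a b b' [X FX Xab] [X' FX' Xab'].
    have [XX'|X'X] := Ftot X X' FX FX'.
    + exact: (FP X' FX').2.1 a b b' (XX' _ Xab) Xab'.
    + exact: (FP X FX).2.1 a b b' Xab (X'X _ Xab').
  - move=> a a' b [X FX Xab] [X' FX' Xab'].
    have [XX'|X'X] := Ftot X X' FX FX'.
    + exact: (FP X' FX').2.2 a a' b (XX' _ Xab) Xab'.
    + exact: (FP X FX).2.2 a a' b Xab (X'X _ Xab').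
case: (pselect (forall a, A a -> exists b, G (a, b))) => [Atot|nAtot].
  left; have [f fP] := rel_fun b0 (fun a b => G (a, b)).
  apply: (le_inj (f:=f)) => [x Ax|x y Ax Ay fxy].
    by have := GAB _ (fP x (Atot x Ax)) => -[].
  apply: (Gi x y (f x)); first exact: fP x (Atot x Ax).
  by rewrite fxy; exact: fP y (Atot y Ay).
case: (pselect (forall b, B b -> exists a, G (a, b))) => [Btot|nBtot].
  right; have [f fP] := rel_fun a0 (fun b a => G (a, b)).
  apply: (le_inj (f:=f)) => [x Bx|x y Bx By fxy].
    by have := GAB _ (fP x (Btot x Bx)) => -[].
  apply: (Gf (f x) x y); first exact: fP x (Btot x Bx).
  by rewrite fxy; exact: fP y (Btot y By).
move/existsNP: nAtot => [a /not_implyP [Aa /forallNP na]].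
move/existsNP: nBtot => [b /not_implyP [Bb /forallNP nb]].
exfalso; refine (Gmax (G `|` [set (a, b)]) _ _).
  split; first by move=> p Gp; left.
  by move=> /(_ (a, b) (or_intror erefl)) /na.
split; [|split].
- by move=> p [/GAB //|->]; split.
- move=> a1 b1 b2 [G1|E1] [G2|E2].
  + exact: Gf G1 G2.
  + by case: E2 => e1 _; rewrite e1 in G1; case: (na b1 G1).
  + by case: E1 => e1 _; rewrite e1 in G2; case: (na b2 G2).
  + by case: E1 => _ ->; case: E2 => _ ->.
- move=> a1 a2 b1 [G1|E1] [G2|E2].
  + exact: Gi G1 G2.
  + by case: E2 => _ e1; rewrite e1 in G1; case: (nb a1 G1).
  + by case: E1 => _ e1; rewrite e1 in G2; case: (nb a2 G2).
  + by case: E1 => -> _; case: E2 => -> _.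
Qed.

Lemma inj_le2 T U (A : set T) (B : set U) (x0 : T) : A x0 -> A #<= B ->
  exists f : T -> U, (forall x, A x -> B (f x)) /\
  (forall x y, A x -> A y -> f x = f y -> x = y).
Proof.
move=> Ax0; elim/Ppointed: U => U in B *.
  rewrite (empty_eq0 B) => /card_le0P A0.
  by rewrite A0 in Ax0.
move=> /pcard_leP /injfunPex [f ff fi]; exists f; split; first by move=> x; apply: ff.
by move=> x y Ax Ay; apply: fi; apply/mem_set.
Qed.

Lemma card_lt_le T U (A : set T) (B : set U) : A #<= B -> ~ (B #<= A) -> ~ (B #<= A).
Proof. by []. Qed.

Lemma le_setX T1 T2 U1 U2 (A : set T1) (B : set T2) (A' : set U1) (B' : set U2) :
  A #<= A' -> B #<= B' -> A `*` B #<= A' `*` B'.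
Proof.
move=> AA BB.
case: (pselect (exists p, (A `*` B) p)) => [[[a0 b0] [/= Aa0 Bb0]]|n]; last first.
  exact: set0_le.
have [f [fA fi]] := inj_le2 Aa0 AA.
have [g [gB gi]] := inj_le2 Bb0 BB.
apply: (le_inj (f := fun p => (f p.1, g p.2))).
  by move=> [x y] [/= Ax By]; split; [apply: fA|apply: gB].
move=> [x y] [x' y'] [/= Ax By] [/= Ax' By'] [/fi e1 /gi e2].
by rewrite (e1 Ax Ax') (e2 By By').
Qed.

Lemma le_bigcup I0 T V (I : set I0) (F : I0 -> set T) (M : set V) :
  (forall i, I i -> F i #<= M) -> \bigcup_(i in I) F i #<= I `*` M.
Proof.
move=> FM.
case: (pselect (exists x, (\bigcup_(i in I) F i) x)) => [[x0 [i0 Ii0 Fx0]]|n]; last first.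
  exact: set0_le.
have [f0 [f0M _]] := inj_le2 Fx0 (FM i0 Ii0).
have [idx idxP] := rel_fun i0 (fun x i => I i /\ F i x).
have [fam famP] := rel_fun f0 (fun i (f : T -> V) =>
  (forall x, F i x -> M (f x)) /\ (forall x y, F i x -> F i y -> f x = f y -> x = y)).
have famP' i : I i -> (exists x, F i x) ->
    (forall x, F i x -> M (fam i x)) /\
    (forall x y, F i x -> F i y -> fam i x = fam i y -> x = y).
  move=> Ii [x Fx]; apply: famP; exact: inj_le2 Fx (FM i Ii).
apply: (le_inj (f := fun x => (idx x, fam (idx x) x))).
  move=> x [i Ii Fx]; have [Ii' Fx'] := idxP x (ex_intro _ i (conj Ii Fx)).
  split => //=; apply: (famP' _ Ii' (ex_intro _ x Fx')).1 Fx'.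
move=> x y [i Ii Fx] [i' Ii' Fy] [] /= e1 e2.
have [Ix Fx'] := idxP x (ex_intro _ i (conj Ii Fx)).
have [Iy Fy'] := idxP y (ex_intro _ i' (conj Ii' Fy)).
rewrite -e1 in Fy' e2.
exact: (famP' _ Ix (ex_intro _ x Fx')).2 x y Fx' Fy' e2.
Qed.

Lemma bool_le T (M : set T) : infinite_set M -> [set: bool] #<= M.
Proof.
move=> /infiniteP NM; apply: card_le_trans NM.
apply: (le_inj (f := nat_of_bool)) => // [[] []] //.
Qed.

Lemma le_setU2 T V (A : set T) (B : set T) (M : set V) :
  [set: bool] #<= M -> M `*` M #<= M ->
  A #<= M -> B #<= M -> A `|` B #<= M.
Proof.
move=> bM MM AM BM.
have sub : A `|` B `<=` \bigcup_(i in [set: bool]) (if i then A else B).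
  by move=> x [Ax|Bx]; [exists true|exists false].
apply: card_le_trans (subset_card_le sub) _.
apply: card_le_trans (le_bigcup (I := [set: bool]) (M := M) _) _.
  by move=> [] _.
apply: card_le_trans MM.
exact: le_setX.
Qed.

Lemma hessenberg T (A : set T) : infinite_set A -> A `*` A #<= A.
Proof.
move=> Ainf.
have [t0 At0] := infinite_setN0 Ainf.
pose rng (G : set ((T * T) * T)) := [set c | exists p, G (p, c)].
pose P := [set G : set ((T * T) * T) |
  (forall p c, G (p, c) -> A c) /\
  (forall p p' c, G (p, c) -> G (p', c) -> p = p') /\
  (forall a b, rng G a -> rng G b -> exists c, G ((a, b), c)) /\
  (G = set0 \/ [set: nat] #<= rng G)].
have [G [[GA [Gi [Gt Ginf]]] Gmax]] :
    exists G, P G /\ forall G', G `<` G' -> ~ P G'.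
  apply: Zorn_bigcup => F FP Ftot; split; [|split; [|split]].
  - by move=> p c [X FX Xpc]; exact: (FP X FX).1 _ _ Xpc.
  - move=> p p' c [X FX Xp] [X' FX' Xp'].
    have [XX'|X'X] := Ftot X X' FX FX'.
    + exact: (FP X' FX').2.1 _ _ _ (XX' _ Xp) Xp'.
    + exact: (FP X FX).2.1 _ _ _ Xp (X'X _ Xp').
  - move=> a b [pa [X FX Xa]] [pb [X' FX' Xb]].
    have [XX'|X'X] := Ftot X X' FX FX'.
    + have [c Xc] := (FP X' FX').2.2.1 a b
        (ex_intro _ pa (XX' _ Xa)) (ex_intro _ pb Xb).
      by exists c; exists X'.
    + have [c Xc] := (FP X FX).2.2.1 a b
        (ex_intro _ pa Xa) (ex_intro _ pb (X'X _ Xb)).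
      by exists c; exists X.
  - case: (pselect (exists X, F X /\ X !=set0)) => [[X [FX [q Xq]]]|nF].
      right; case: (FP X FX).2.2.2 => [X0|XN].
        by rewrite X0 in Xq.
      apply: card_le_trans XN _; apply: subset_card_le => c [p Xp].
      by exists p; exists X.
    left; apply/seteqP; split=> // q [X FX Xq].
    by apply: nF; exists X; split=> //; exists q.
have [n [nA ni]] : exists n : nat -> T, (forall k, A (n k)) /\
    (forall x y, [set: nat] x -> [set: nat] y -> n x = n y -> x = y).
  have /infiniteP NA := Ainf.
  have [n [nA ni]] := inj_le2 (x0 := 0%N) Logic.I NA.
  by exists n; split=> // k; apply: nA.
have [pi [_ pii]] : exists pi : nat * nat -> nat, (forall x, [set: nat * nat] x -> [set: nat] (pi x)) /\
    (forall x y, [set: nat * nat] x -> [set: nat * nat] y -> pi x = pi y -> x = y).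
  have /card_eqPle [NN _] := card_nat2.
  exact: (@inj_le2 _ _ _ _ (0, 0)%N Logic.I NN).
case: (pselect (G !=set0)) => [GN0|G0]; last first.
  have GE : G = set0.
    by apply/seteqP; split=> // q Gq; apply: G0; exists q.
  pose G0' := [set q : (T * T) * T | exists i j,
     q.1 = (n i, n j) /\ q.2 = n (pi (i, j))].
  exfalso; refine (Gmax G0' _ _).
    split; first by rewrite GE.
    move=> /(_ ((n 0, n 0), n (pi (0, 0)))%N).
    by rewrite GE; apply; exists 0%N, 0%N.
  split; [|split; [|split]].
  - by move=> p c [i [j [_ /= ->]]].
  - move=> p p' c [i [j [/= -> ->]]] [i' [j' [/= -> e]]].
    have := ni _ _ Logic.I Logic.I e => /(pii _ _ Logic.I Logic.I) [-> ->].
    by [].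
  - move=> a b [pa [i [j [_ /= ->]]]] [pb [i' [j' [_ /= ->]]]].
    by exists (n (pi (pi (i, j), pi (i', j')))); exists (pi (i, j)), (pi (i', j')).
  - right; apply: (le_inj (f := fun k => n (pi (k, 0%N)))).
      by move=> k _; exists (n k, n 0%N); exists k, 0%N.
    move=> x y _ _ /(ni _ _ Logic.I Logic.I) /(pii _ _ Logic.I Logic.I).
    by case.
case: Ginf => [G0|NS].
  by case: GN0 => q; rewrite G0.
pose S := rng G.
have SA : S `<=` A by move=> c [p Gp]; exact: GA Gp.
have [j jP] := rel_fun t0 (fun (p : T * T) c => G (p, c)).
have jS a b : S a -> S b -> S (j (a, b)) /\ G ((a, b), j (a, b)).
  move=> Sa Sb; have Gj := jP (a, b) (Gt a b Sa Sb).
  by split=> //; exists (a, b).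
have ji a b a' b' : S a -> S b -> S a' -> S b' ->
    j (a, b) = j (a', b') -> a = a' /\ b = b'.
  move=> Sa Sb Sa' Sb' e.
  have [_ G1] := jS a b Sa Sb; have [_ G2] := jS a' b' Sa' Sb'.
  rewrite e in G1.
  by have := Gi _ _ _ G1 G2 => -[-> ->].
have [m [mS mi]] := inj_le2 (x0 := 0%N) Logic.I NS.
have m01 : m 0%N <> m 1%N by move=> /(mi _ _ Logic.I Logic.I).
have notle : ~ (S #<= A `\` S).
  move=> SD.
  have Ss0 := mS 0%N Logic.I.
  have [d [dD di]] := inj_le2 Ss0 SD.
  pose D := d @` S.
  have DS y : D y -> ~ S y.
    by move=> [x Sx <-]; have [] := dD x Sx.
  have DA y : D y -> A y.
    by move=> [x Sx <-]; have [] := dD x Sx.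
  have [dinv dinvP] := rel_fun t0 (fun y x => S x /\ d x = y).
  have dinvD y : D y -> S (dinv y) /\ d (dinv y) = y.
    by move=> [x Sx <-]; apply: dinvP; exists x.
  pose enc x := if pselect (S x) then j (x, m 0%N) else j (dinv x, m 1%N).
  have encS x : (S `|` D) x -> S (enc x).
    rewrite /enc; case: pselect => [Sx _|nSx [//|Dx]].
      exact: (jS _ _ Sx (mS 0%N Logic.I)).1.
    exact: (jS _ _ (dinvD x Dx).1 (mS 1%N Logic.I)).1.
  have enci x y : (S `|` D) x -> (S `|` D) y -> enc x = enc y -> x = y.
    rewrite /enc => SDx SDy.
    case: pselect => [Sx|nSx]; case: pselect => [Sy|nSy].
    - by move/(ji _ _ _ _ Sx (mS 0%N Logic.I) Sy (mS 0%N Logic.I)) => [].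
    - have Dy : D y by case: SDy.
      move/(ji _ _ _ _ Sx (mS 0%N Logic.I) (dinvD y Dy).1 (mS 1%N Logic.I)).
      by move=> [_ /m01].
    - have Dx : D x by case: SDx.
      move/(ji _ _ _ _ (dinvD x Dx).1 (mS 1%N Logic.I) Sy (mS 0%N Logic.I)).
      by move=> [_ /esym /m01].
    - have Dx : D x by case: SDx.
      have Dy : D y by case: SDy.
      move/(ji _ _ _ _ (dinvD x Dx).1 (mS 1%N Logic.I) (dinvD y Dy).1 (mS 1%N Logic.I)).
      by move=> [e _]; rewrite -(dinvD x Dx).2 -(dinvD y Dy).2 e.
  pose code (p : T * T) := d (j (enc p.1, enc p.2)).
  have codeD p : (S `|` D) p.1 -> (S `|` D) p.2 -> D (code p).
    move=> SD1 SD2; exists (j (enc p.1, enc p.2)) => //.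
    exact: (jS _ _ (encS _ SD1) (encS _ SD2)).1.
  pose G' := G `|` [set q : (T * T) * T |
    (S `|` D) q.1.1 /\ (S `|` D) q.1.2 /\ q.2 = code q.1].
  have rngG' c : rng G' c -> (S `|` D) c.
    move=> [p [Gpc|[/= SD1 [SD2 ->]]]]; first by left; exists p.
    by right; apply: codeD.
  refine (Gmax G' _ _).
    split; first by move=> q Gq; left.
    move=> /(_ ((m 0%N, m 0%N), code (m 0%N, m 0%N))) G'G.
    have : G ((m 0%N, m 0%N), code (m 0%N, m 0%N)).
      by apply: G'G; right; split; [left|split; [left|]].
    move=> Gc; apply: (DS _ (codeD (m 0%N, m 0%N) (or_introl Ss0) (or_introl Ss0))).
    by exists (m 0%N, m 0%N).
  split; [|split; [|split]].
  - move=> p c [/GA //|[/= SD1 [SD2 ->]]].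
    exact: DA (codeD _ SD1 SD2).
  - move=> p p' c [Gp|[/= SD1 [SD2 ->]]] [Gp'|[/= SD1' [SD2' e]]].
    + exact: Gi Gp Gp'.
    + exfalso; apply: (DS _ (codeD _ SD1' SD2')); rewrite -e; by exists p.
    + exfalso; apply: (DS _ (codeD _ SD1 SD2)); by exists p'.
    + move: e; rewrite /code => /di e.
      have := e (jS _ _ (encS _ SD1) (encS _ SD2)).1
                (jS _ _ (encS _ SD1') (encS _ SD2')).1.
      move=> /(ji _ _ _ _ (encS _ SD1) (encS _ SD2) (encS _ SD1') (encS _ SD2')).
      move=> [/(enci _ _ SD1 SD1') e1 /(enci _ _ SD2 SD2') e2].
      by clear e; move: e1 e2; case: p {SD1 SD2} => ? ?; case: p' {SD1' SD2'} => ? ? /= -> ->.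
  - move=> a b /rngG' SDa /rngG' SDb.
    by exists (code (a, b)); right.
  - right; apply: card_le_trans NS _; apply: subset_card_le => c [p Gp].
    by exists p; left.
have [AS|SAS] := card_le_total (A `\` S) S; last by case: notle.
have SS : S `*` S #<= S.
  apply: (le_inj (f := j)) => [[a b] [/= Sa Sb]|[a b] [a' b'] [/= Sa Sb] [/= Sa' Sb'] e].
    exact: (jS a b Sa Sb).1.
  by have [-> ->] := ji _ _ _ _ Sa Sb Sa' Sb' e.
have bS : [set: bool] #<= S by apply: bool_le; apply/infiniteP.
have AS' : A #<= S.
  apply: card_le_trans (le_setU2 bS SS (card_lexx S) AS).
  apply: subset_card_le => x Ax.
  by case: (pselect (S x)) => Sx; [left|right].
apply: card_le_trans (le_setX AS' AS') _.
apply: card_le_trans SS _.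
exact: subset_card_le.
Qed.

Lemma lt_of_le_lt T U V (A : set T) (B : set U) (C : set V) :
  A #<= B -> card_lt B C -> card_lt A C.
Proof.
move=> AB [BC nCB]; split; first exact: card_le_trans AB BC.
by move=> CA; apply: nCB; apply: card_le_trans CA AB.
Qed.

Lemma infinite_le T U (A : set T) (B : set U) :
  infinite_set A -> A #<= B -> infinite_set B.
Proof. by move=> /infiniteP NA AB; apply/infiniteP; apply: card_le_trans AB. Qed.

Lemma le_setT_inj T U (A : set U) (t0 : T) : [set: T] #<= A ->
  exists f : T -> U, (forall x, A (f x)) /\ injective f.
Proof.
move=> TA; have [f [fA fi]] := inj_le2 (x0 := t0) Logic.I TA.
by exists f; split=> [x|x y]; [apply: fA|apply: fi].
Qed.

Lemma image_eq T U (f : T -> U) (A : set T) : injective f -> f @` A #= A.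
Proof. by move=> fi; apply: inj_card_eq => x y _ _; apply: fi. Qed.

Lemma part1a L Th (Y : set (set L)) :
  infinite_set [set: Th] -> [set: Th] #<= [set: L] ->
  ~ ([set: L] #<= [set: Th]) -> m_family Th Y -> [set: L] #<= Y.
Proof.
move=> Thinf ThL nLTh [Ysub Ycov].
have [th0 _] := infinite_setN0 Thinf.
case: (pselect ([set: L] #<= Y)) => // nLY; exfalso.
suff claim : forall V (M : set V), infinite_set M -> Y #<= M ->
    [set: Th] #<= M -> ~ ([set: L] #<= M) -> False.
  have [YTh|ThY] := card_le_total Y [set: Th].
    exact: (claim _ _ Thinf YTh (card_lexx _) nLTh).
  exact: (claim _ _ (infinite_le Thinf ThY) (card_lexx _) ThY nLY).
move=> V M Minf YM ThM nLM.
have MM := hessenberg Minf; have bM := bool_le Minf.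
pose U := \bigcup_(y in Y) y.
have UM : U #<= M.
  apply: card_le_trans (le_bigcup (M := M) _) _.
    move=> y Yy; have /card_eqPle [yTh _] := Ysub y Yy.
    exact: card_le_trans yTh ThM.
  exact: card_le_trans (le_setX YM (card_lexx M)) MM.
have [ThR|RTh] := card_le_total [set: Th] (~` U).
  have [e [eR ei]] := le_setT_inj th0 ThR.
  have [y [Yy /card_eqPle [_ ThXy]]] := Ycov (e @` setT) (image_eq _ ei).
  have : (e @` setT) `&` y = set0.
    apply/seteqP; split=> // x [[t _ <-] yet].
    by apply: (eR t); exists y.
  move=> E; rewrite E in ThXy.
  by move/card_le0P: ThXy => /seteqP [/(_ th0 Logic.I)].
apply: nLM.
apply: card_le_trans (le_setU2 bM MM UM (card_le_trans RTh ThM)).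
apply: subset_card_le => x _.
by case: (pselect (U x)) => Ux; [left|right].
Qed.

Lemma part2 L Th C (H : set (Th -> set L)) :
  infinite_set [set: Th] -> [set: Th] #<= [set: L] ->
  (forall S : set C, card_lt S [set: C] -> S #<= [set: Th]) ->
  m4_family Th C H ->
  exists Y : set (set L), m_family Th Y /\ Y #<= H.
Proof.
move=> Thinf ThL hC [Hsmall Hcov].
have [th0 _] := infinite_setN0 Thinf.
have ThTh := hessenberg Thinf; have bTh := bool_le Thinf.
have [e [_ ei]] := le_setT_inj th0 ThL.
pose P0 := e @` [set: Th].
have P0Th : P0 #= [set: Th] := image_eq _ ei.
pose yof (h : Th -> set L) := (\bigcup_(xi in [set: Th]) h xi) `|` P0.
exists (yof @` H); split; last exact: card_image_le.
split.
  move=> _ [h Hh <-]; apply: Cantor_Bernstein.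
    refine (le_setU2 bTh ThTh _ _); last by move/card_eqPle: P0Th => [].
    apply: card_le_trans (le_bigcup (M := [set: Th]) _) ThTh.
    move=> xi _; have [hlt _] := Hsmall h Hh xi.
    case: (pselect (exists x, h xi x)) => [[x0 hx0]|nh]; last exact: set0_le.
    have [f [_ fi]] := inj_le2 hx0 hlt.
    have fe : f @` h xi #= h xi.
      by apply: inj_card_eq => a b /set_mem ha /set_mem hb; apply: fi.
    move/card_eqPle: (fe) => [_ hf].
    apply: card_le_trans hf _; apply: hC.
    by apply: lt_of_le_lt (Hsmall h Hh xi); move/card_eqPle: fe => [].
  move/card_eqPle: P0Th => [_ ThP0]; apply: card_le_trans ThP0 _.
  by apply: subset_card_le => x P0x; right.
move=> X /card_eqPle [XTh ThX].
have [g [gX gi]] := le_setT_inj th0 ThX.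
have [h [Hh /card_eqPle [_ ThS]]] := Hcov [set: Th] (card_eqxx _) g.
exists (yof h); split; first by exists h.
apply: Cantor_Bernstein.
  by apply: card_le_trans _ XTh; apply: subset_card_le => x [].
apply: card_le_trans ThS _.
have /card_eqPle [_ SgS] := image_eq [set xi | [set: Th] xi /\ h xi (g xi)] gi.
apply: card_le_trans SgS _; apply: subset_card_le => _ [xi [_ hxi] <-].
by split; [apply: gX | left; exists xi].
Qed.

Lemma part3a L Th C (H : set (L -> set L)) :
  infinite_set [set: Th] -> [set: Th] #<= [set: L] ->
  m4_family Th C H ->
  exists H' : set (Th -> set Th), m4_family Th C H' /\ H' #<= H.
Proof.
move=> Thinf ThL [Hsmall Hcov].
have [th0 _] := infinite_setN0 Thinf.
have [e [_ ei]] := le_setT_inj th0 ThL.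
have [einv einvP] := rel_fun th0 (fun x xi => e xi = x).
have einvK xi : einv (e xi) = xi.
  by apply: ei; apply: einvP; exists xi.
pose F (h : L -> set L) := fun xi => [set eta | h (e xi) (e eta)].
exists (F @` H); split; last exact: card_image_le.
split.
  move=> _ [h Hh <-] xi; apply: lt_of_le_lt (Hsmall h Hh (e xi)).
  by apply: (le_inj (f := e)) => // x y _ _ /ei.
move=> X XTh g.
pose g' := fun x => e (g (einv x)).
have X'Th : e @` X #= [set: Th] by apply: card_eq_trans (image_eq _ ei) XTh.
have [h [Hh /card_eqPle [_ ThS]]] := Hcov (e @` X) X'Th g'.
exists (F h); split; first by exists h.
apply: Cantor_Bernstein.
  move/card_eqPle: XTh => [XTh _].
  by apply: card_le_trans _ XTh; apply: subset_card_le => x [].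
apply: card_le_trans ThS _.
apply: (le_inj (f := einv)).
  move=> _ [[xi Xxi <-]] hx; rewrite /F /= einvK; split=> //.
  by move: hx; rewrite /g' einvK.
  idtac.
move=> _ _ [[xi Xxi <-] _] [[xi' Xxi' <-] _].
by rewrite !einvK => ->.
Qed.

Lemma two_elems C : ([set: C] #= [set: bool] \/ infinite_set [set: C]) ->
  exists c1 c2 : C, c1 <> c2.
Proof.
move=> HC.
have bC : [set: bool] #<= [set: C].
  by case: HC => [/card_eqPle [_ //]|Cinf]; exact: bool_le.
have [f [_ fi]] := le_setT_inj true bC.
by exists (f true), (f false) => /fi.
Qed.

Lemma singleton_lt C V (v : V) : (exists c1 c2 : C, c1 <> c2) ->
  card_lt [set v] [set: C].
Proof.
move=> [c1 [c2 c12]]; split.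
  by apply: (le_inj (f := fun _ => c1)) => // x y -> ->.
move=> /(inj_le2 (x0 := c1) Logic.I) [f [fv fi]].
by apply: c12; apply: fi => //; rewrite (fv c1 Logic.I) (fv c2 Logic.I).
Qed.

Lemma eq_bij T U (A : set T) (B : set U) (x0 : T) : A x0 -> A #= B ->
  exists f : T -> U, (forall x, A x -> B (f x)) /\
    (forall x y, A x -> A y -> f x = f y -> x = y) /\
    (forall b, B b -> exists2 a, A a & f a = b).
Proof.
move=> Ax0; elim/Ppointed: U => U in B *.
  rewrite (empty_eq0 B) => /card_eqPle [/card_le0P A0 _].
  by rewrite A0 in Ax0.
move=> /pcard_eqP /bijPex [f [ff fi fs]]; exists f.
split; first by move=> x; apply: ff.
split; first by move=> x y Ax Ay; apply: fi; apply/mem_set.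
by move=> b /fs [a Aa <-]; exists a.
Qed.

Lemma part3b L Th C (H1 : set (Th -> set Th)) (Y : set (set L)) :
  infinite_set [set: L] -> infinite_regular Th ->
  [set: Th] #<= [set: L] -> ~ ([set: L] #<= [set: Th]) ->
  (exists c1 c2 : C, c1 <> c2) ->
  m4_family Th C H1 -> m_family Th Y ->
  exists H : set (L -> set L), m4_family Th C H /\ (H #<= H1 \/ H #<= Y).
Proof.
move=> Linf [Thinf Threg] ThL nLTh C2 [H1small H1cov] [Ysub Ycov].
have [th0 _] := infinite_setN0 Thinf.
have [l0 _] := infinite_setN0 Linf.
have LY := part1a Thinf ThL nLTh (conj Ysub Ycov).
have Yinf := infinite_le Linf LY.
have [phi phiP] := rel_fun (fun _ : Th => l0) (fun (y : set L) (f : Th -> L) =>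
   (forall x, y (f x)) /\ injective f /\ (forall b, y b -> exists a, f a = b)).
have phiY y : Y y -> (forall x, y (phi y x)) /\ injective (phi y) /\
    (forall b, y b -> exists a, phi y a = b).
  move=> Yy; apply: phiP.
  have [f [fy [fi fs]]] := eq_bij (x0 := th0) Logic.I (card_esym (Ysub y Yy)).
  exists f; split; first by move=> x; apply: fy.
  split; first by move=> x x'; apply: fi.
  by move=> b /fs [a _ <-]; exists a.
have [psi psiP] := rel_fun th0 (fun (yx : set L * L) xi => phi yx.1 xi = yx.2).
have psiK y xi : Y y -> psi (y, phi y xi) = xi.
  move=> Yy; have [_ [pi _]] := phiY y Yy; apply: pi.
  by apply: (psiP (y, phi y xi)); exists xi.
have phiK y x : Y y -> y x -> phi y (psi (y, x)) = x.
  move=> Yy yx; have [_ [_ ps]] := phiY y Yy.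
  exact: (psiP (y, x)) (ps x yx).
have psii y x x' : Y y -> y x -> y x' -> psi (y, x) = psi (y, x') -> x = x'.
  by move=> Yy yx yx' e; rewrite -(phiK y x Yy yx) -(phiK y x' Yy yx') e.
pose hof (t : (set L * set L) * (Th -> set Th)) : L -> set L :=
  fun x => phi t.1.2 @` (t.2 (psi (t.1.1, x))).
pose cst (v : L) : L -> set L := fun _ => [set v].
pose H := hof @` ((Y `*` Y) `*` H1) `|` cst @` [set: L].
have bound : forall V (M : set V), infinite_set M -> Y #<= M -> H1 #<= M ->
    H #<= M.
  move=> V M Minf YM H1M.
  have MM := hessenberg Minf; have bM := bool_le Minf.
  refine (le_setU2 bM MM _ _).
    apply: card_le_trans (card_image_le _ _) _.
    apply: card_le_trans (le_setX (le_setX YM YM) H1M) _.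
    exact: card_le_trans (le_setX MM (card_lexx M)) MM.
  apply: card_le_trans (card_image_le _ _) _.
  exact: card_le_trans LY YM.
have Hcard : H #<= H1 \/ H #<= Y.
  have [YH1|H1Y] := card_le_total Y H1.
    by left; exact: bound _ _ (infinite_le Yinf YH1) YH1 (card_lexx _).
  by right; exact: bound _ _ Yinf (card_lexx _) H1Y.
exists H; split => //.
split.
  move=> _ [[t [[/= Yt1 Yt2] H1t] <-]|[v _ <-]] x.
    apply: lt_of_le_lt (H1small _ H1t (psi (t.1.1, x))).
    exact: card_image_le.
  exact: singleton_lt.
move=> X /card_eqPle [XTh ThX] g.
have [y [Yy X0Th]] := Ycov X (Cantor_Bernstein XTh ThX).
pose X0 := X `&` y.
move/card_eqPle: X0Th => [X0le ThX0].
pose Z := (fun x => psi (y, x)) @` X0.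
have ZX0 : Z #= X0.
  apply: inj_card_eq => x x' /set_mem [_ yx] /set_mem [_ yx'].
  exact: psii.
have ThZ : [set: Th] #<= Z.
  by apply: card_le_trans ThX0 _; move/card_eqPle: ZX0 => [].
pose k xi := g (phi y xi).
pose W := g @` X0.
have [rep repP] := rel_fun th0 (fun v xi => Z xi /\ k xi = v).
have repW v : W v -> Z (rep v) /\ k (rep v) = v.
  move=> [x X0x <-]; apply: repP; exists (psi (y, x)); split.
    by exists x.
  by rewrite /k phiK //; case: X0x.
pose I := rep @` W.
pose F i := [set xi | Z xi /\ k xi = k i].
case: (pselect (exists2 i, I i & ~ card_lt (F i) [set: Th])) =>
    [[i Ii nlt]|allsmall].
  have ThF : [set: Th] #<= F i.
    case: (pselect ([set: Th] #<= F i)) => // nThF.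
    by case: nlt; split => //; exact: card_leT.
  exists (cst (k i)); split; first by right; exists (k i).
  apply: Cantor_Bernstein.
    by apply: card_le_trans _ XTh; apply: subset_card_le => x [].
  apply: card_le_trans ThF _.
  have [_ [phii _]] := phiY y Yy.
  have /card_eqPle [_ Fim] := image_eq (F i) phii.
  apply: card_le_trans Fim _; apply: subset_card_le => _ [xi [Zxi kxi] <-].
  split; last exact: kxi.
  by case: Zxi => x [Xx yx] <-; rewrite phiK.
have Fsmall i : I i -> card_lt (F i) [set: Th].
  move=> Ii; case: (pselect (card_lt (F i) [set: Th])) => // nlt.
  by case: allsmall; exists i.
have ThI : [set: Th] #<= I.
  case: (pselect ([set: Th] #<= I)) => // nThI.
  have [_ nU] := Threg I F (conj (card_leT I) nThI) Fsmall.
  case: nU; apply: card_le_trans ThZ _; apply: subset_card_le => xi Zxi.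
  have Wk : W (k xi).
    case: Zxi => x X0x <-; exists x => //.
    by rewrite /k phiK //; case: X0x.
  exists (rep (k xi)); first by exists (k xi).
  by split => //; rewrite (repW _ Wk).2.
have ThW : [set: Th] #<= W by apply: card_le_trans ThI (card_image_le _ _).
have WTh : W #<= [set: Th] by apply: card_le_trans (card_image_le _ _) X0le.
have [y' [Yy' /card_eqPle [_ ThW']]] := Ycov W (Cantor_Bernstein WTh ThW).
pose X1 := [set x | X0 x /\ y' (g x)].
pose Z1 := (fun x => psi (y, x)) @` X1.
have Z1X1 : Z1 #= X1.
  apply: inj_card_eq => x x' /set_mem [[_ yx] _] /set_mem [[_ yx'] _].
  exact: psii.
have Z1Th : sub_card Th Z1.
  apply: Cantor_Bernstein; first exact: card_leT.
  apply: card_le_trans ThW' _.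
  apply: card_le_trans (_ : _ #<= g @` X1) _.
    by apply: subset_card_le => _ [[x X0x <-] y'gx]; exists x.
  apply: card_le_trans (card_image_le _ _) _.
  by move/card_eqPle: Z1X1 => [].
pose g1 xi := psi (y', g (phi y xi)).
have [h1 [H1h1 /card_eqPle [_ ThS1]]] := H1cov Z1 Z1Th g1.
exists (hof ((y, y'), h1)); split.
  by left; exists ((y, y'), h1).
apply: Cantor_Bernstein.
  by apply: card_le_trans _ XTh; apply: subset_card_le => x [].
apply: card_le_trans ThS1 _.
have [_ [phii _]] := phiY y Yy.
have /card_eqPle [_ Sim] := image_eq [set xi | Z1 xi /\ h1 xi (g1 xi)] phii.
apply: card_le_trans Sim _; apply: subset_card_le => _ [xi [Z1xi hxi] <-].
case: Z1xi hxi => x [[Xx yx] y'gx] <- hxi.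
rewrite phiK //; split => //.
exists (g1 (psi (y, x))) => //.
by rewrite /g1 phiK // phiK.
Qed.

Unset Implicit Arguments.

Theorem lemma2p4 (L Th C : Type) :
  infinite_set [set: L] ->
  infinite_regular Th ->
  card_lt [set: Th] [set: L] ->
  ([set: C] #= [set: bool] \/ infinite_set [set: C]) ->
  (* (1) lambda <= m(theta,lambda) <= min{cf(subseteq), cf(supseteq)} *)
  ((forall Y : set (set L), m_family Th Y -> [set: L] #<= Y) /\
   (forall Z : set (set L), cf_sub_family Th Z ->
      exists Y : set (set L), m_family Th Y /\ Y #<= Z) /\
   (forall Z : set (set L), cf_sup_family Th Z ->
      exists Y : set (set L), m_family Th Y /\ Y #<= Z)) /\
  (* (2) chi <= theta^+  ->  m(theta,lambda) <= m(theta,lambda,theta,chi);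
     here chi <= theta^+ is expressed as: every subset of C of cardinality
     < |C| has cardinality <= |Th| *)
  ((forall S : set C, card_lt S [set: C] -> S #<= [set: Th]) ->
   forall H : set (Th -> set L), m4_family Th C H ->
     exists Y : set (set L), m_family Th Y /\ Y #<= H) /\
  (* (3) m(theta,theta,theta,chi) <= m(lambda,lambda,theta,chi)
         <= max{m(theta,theta,theta,chi), m(theta,lambda)} *)
  ((forall H : set (L -> set L), m4_family Th C H ->
      exists H' : set (Th -> set Th), m4_family Th C H' /\ H' #<= H) /\
   (forall (H1 : set (Th -> set Th)) (Y : set (set L)),
      m4_family Th C H1 -> m_family Th Y ->
      exists H : set (L -> set L), m4_family Th C H /\ (H #<= H1 \/ H #<= Y))).
Proof.
move=> Linf Threg [ThL nLTh] HC.
have Thinf := Threg.1.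
split; [split; [|split]|split; [|split]].
- by move=> Y; apply: part1a.
- move=> Z [Zsub Zcov]; exists Z; split=> //; split=> // X XTh.
  have [y [Zy Xy]] := Zcov X XTh; exists y; split=> //.
  by have -> : X `&` y = X by apply/seteqP; split=> [x []//|x Xx]; split=> //; apply: Xy.
- move=> Z [Zsub Zcov]; exists Z; split=> //; split=> // X XTh.
  have [y [Zy yX]] := Zcov X XTh; exists y; split=> //.
  have -> : X `&` y = y by apply/seteqP; split=> [x []//|x yx]; split=> //; apply: yX.
  exact: Zsub.
- by move=> hC H; apply: part2.
- by move=> H; apply: part3a.
- move=> H1 Y; apply: part3b => //; exact: two_elems.
Qed.
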